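(* Let $M$ be a finite-dimensional simple $YQ(1)$-module on which each central element $Z_{2i}$ ($i\ge0$) acts by a scalar $\chi_{2i}$, and set $\chi(u)=\sum_{i\ge0}\chi_{2i}u^{-2i-1}$. Then $\chi(u)$ is a rational function of the form $\frac{a_0u^{-1}+\dots+a_pu^{-2p-1}}{1+c_1u^{-2}+\dots+c_qu^{-2q}}$ for some $p,q\ge0$ and $a_i,c_j\in\mathbb C$ (equality of formal power series in $u^{-1}$).
   Context: $YQ(1)$ is the associative unital superalgebra over $\mathbb C$ generated by $T_{i,j}^{(m)}$, $m\geq1$, $i,j\in\{1,-1\}$, of parity $p(i)+p(j)$ where $p(1)=0$, $p(-1)=1$. With $T_{i,j}(u)=\delta_{ij}+\sum_{m\ge1}T^{(m)}_{i,j}u^{-m}$, the defining relations are, for all $i,j,k,l$: $(u^2-v^2)[T_{i,j}(u),T_{k,l}(v)](-1)^{p(i)p(k)+p(i)p(l)+p(k)p(l)}=(u+v)(T_{k,j}(u)T_{i,l}(v)-T_{k,j}(v)T_{i,l}(u))-(u-v)(T_{-k,j}(u)T_{-i,l}(v)-T_{k,-j}(v)T_{i,-l}(u))(-1)^{p(k)+p(l)}$, and $T_{i,j}(-u)=T_{-i,-j}(u)$ (supercommutators). Set $\eta_i=(-\tfrac12)^i(\operatorname{ad}T^{(2)}_{1,1})^i(T^{(1)}_{1,-1})$ and $Z_{2i}=\frac12[\eta_0,\eta_{2i}]$; the $Z_{2i}$ are central in $YQ(1)$. *)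

(* Defs.v *)
From HB Require Import structures.
From mathcomp Require Import all_boot all_order all_algebra complex.
From mathcomp Require Import Rstruct.
Set Implicit Arguments. Unset Strict Implicit. Unset Printing Implicit Defensive.
Import Order.TTheory GRing.Theory Num.Theory.
Local Open Scope ring_scope.

Definition CC : Type := complex Rdefinitions.R.

(* Indices {1,-1}: [true] stands for 1, [false] for -1.
   Negation i |-> -i is [negb]. Parity: p(1) = 0, p(-1) = 1. *)
Definition idx := bool.
Definition par (i : idx) : nat := if i then 0%N else 1%N.

Definition sgn (k : nat) : CC := (-1) ^+ k.

Section YQ1.
Variables n0 n1 : nat.
(* A finite-dimensional super vector space V = V_0 (+) V_1 over CC, with
   dim V_0 = n0 and dim V_1 = n1; V is identified with column vectors of
   size n0 + n1 (first n0 coordinates even, last n1 odd), and End(V) with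
   'M_(n0+n1), composition being matrix product. *)
Local Notation n := (n0 + n1)%N.
Local Notation Mat := 'M[CC]_(n0 + n1).

Definition is_even (A : Mat) : Prop := ursubmx A = 0 /\ dlsubmx A = 0.
Definition is_odd (A : Mat) : Prop := ulsubmx A = 0 /\ drsubmx A = 0.
Definition has_parity (k : nat) (A : Mat) : Prop :=
  if odd k then is_odd A else is_even A.

Definition scomm (pa pb : nat) (A B : Mat) : Mat :=
  A *m B - sgn (pa * pb) *: (B *m A).

(* A representation is given by the images gen i j m of the generators
   T_{i,j}^{(m)}, m >= 1 (the value at m = 0 is ignored). *)
Variable gen : idx -> idx -> nat -> Mat.

(* coefficients of T_{i,j}(u) = delta_ij + sum_{m>=1} T^{(m)}_{ij} u^{-m} *)
Definition Tc (i j : idx) (m : nat) : Mat :=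
  if m == 0%N then (i == j)%:R%:M else gen i j m.

Definition TC (i j : idx) (a : int) : Mat :=
  match a with Posz m => Tc i j m | Negz _ => 0 end.

(* Coefficient of u^{-a} v^{-b} of both sides of the defining relation
   (u^2-v^2)[T_ij(u),T_kl(v)](-1)^{p(i)p(k)+p(i)p(l)+p(k)p(l)}
     = (u+v)(T_kj(u)T_il(v) - T_kj(v)T_il(u))
       - (u-v)(T_{-k,j}(u)T_{-i,l}(v) - T_{k,-j}(v)T_{i,-l}(u))(-1)^{p(k)+p(l)}.
   Multiplying a series F(u,v) = sum F(r,s) u^{-r} v^{-s} by u (resp. v)
   shifts the coefficient: (uF)(a,b) = F(a+1,b), (vF)(a,b) = F(a,b+1). *)
Definition rel_F (i j k l : idx) (r s : int) : Mat :=
  scomm (par i + par j) (par k + par l) (TC i j r) (TC k l s).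
Definition rel_G1 (i j k l : idx) (r s : int) : Mat :=
  TC k j r *m TC i l s - TC k j s *m TC i l r.
Definition rel_G2 (i j k l : idx) (r s : int) : Mat :=
  TC (~~ k) j r *m TC (~~ i) l s - TC k (~~ j) s *m TC i (~~ l) r.

Definition rel_lhs (i j k l : idx) (a b : int) : Mat :=
  sgn (par i * par k + par i * par l + par k * par l) *:
    (rel_F i j k l (a + 2) b - rel_F i j k l a (b + 2)).
Definition rel_rhs (i j k l : idx) (a b : int) : Mat :=
  (rel_G1 i j k l (a + 1) b + rel_G1 i j k l a (b + 1))
  - sgn (par k + par l) *: (rel_G2 i j k l (a + 1) b - rel_G2 i j k l a (b + 1)).

Definition YQ1_rep : Prop :=
  [/\ (forall i j m, (1 <= m)%N -> has_parity (par i + par j) (gen i j m)),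
      (forall i j k l (a b : int), rel_lhs i j k l a b = rel_rhs i j k l a b) &
      (* T_{i,j}(-u) = T_{-i,-j}(u), coefficientwise *)
      (forall i j m, (1 <= m)%N -> sgn m *: gen i j m = gen (~~ i) (~~ j) m)].

(* Graded subspaces and simplicity.  A subspace of V (column vectors) is
   represented by a matrix W whose rows are the transposed vectors; it is
   stable under A iff  W *m A^T <= W. *)
Definition V0 : Mat := block_mx 1%:M 0 0 0.
Definition V1 : Mat := block_mx 0 0 0 1%:M.
Definition graded_subspace m (W : 'M[CC]_(m, n0 + n1)) : bool :=
  (W <= (W :&: V0) + (W :&: V1))%MS.

Definition simple_rep : Prop :=
  (0 < n)%N /\
  forall m (W : 'M[CC]_(m, n0 + n1)), graded_subspace W ->
    (forall i j k, (1 <= k)%N -> stablemx W (gen i j k)^T) ->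
    \rank W = 0%N \/ \rank W = n.

Definition eta (k : nat) : Mat :=
  (- 2^-1) ^+ k *:
    iter k (fun X => scomm (par true + par true) (par true + par false)
                           (Tc true true 2) X) (Tc true false 1).

Definition Zc (i : nat) : Mat :=
  2^-1 *: scomm (par true + par false) (par true + par false) (eta 0) (eta (2 * i)).

End YQ1.

(* power series chi(x) = sum_i chi_{2i} x^{2i+1}, x = u^{-1};
   chi i stands for chi_{2i}. *)
Definition chi_series (chi : nat -> CC) (k : nat) : CC :=
  if odd k then chi k./2 else 0.

(* Main.v *)
Require Import Defs.
From HB Require Import structures.
From mathcomp Require Import all_boot all_order all_algebra complex.
From mathcomp Require Import Rstruct.
From mathcomp Require Import zify ring.
Import Order.TTheory GRing.Theory Num.Theory.
Local Open Scope ring_scope.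

Lemma lin_sum D (g : 'rV[CC]_D -> CC)
  (gD : forall u v, g (u + v) = g u + g v) (gZ : forall a u, g (a *: u) = a * g u)
  I (r : seq I) (F : I -> 'rV_D) :
  g (\sum_(i <- r) F i) = \sum_(i <- r) g (F i).
Proof.
have g0 : g 0 = 0 by rewrite -(scale0r (0 : 'rV_D)) gZ mul0r.
elim: r => [|x r IH]; first by rewrite !big_nil.
by rewrite !big_cons gD IH.
Qed.

Lemma recur D (Q : 'M[CC]_D) (w0 : 'rV[CC]_D) (g : 'rV[CC]_D -> CC)
  (gD : forall u v, g (u + v) = g u + g v) (gZ : forall a u, g (a *: u) = a * g u)
  (chi : nat -> CC) (Hchi : forall i, chi i = g (w0 *m Q ^+ i)) :
  exists d (b : nat -> CC), b d = 1 /\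
    forall i, \sum_(j < d.+1) b j * chi (i + j)%N = 0.
Proof.
have g0 : g 0 = 0 by rewrite -(scale0r (0 : 'rV_D)) gZ mul0r.
case: D Q w0 g gD gZ Hchi g0 => [|D] Q w0 g gD gZ Hchi g0.
  exists 0%N, (fun _ => 1); split=> // i.
  by rewrite big_ord1 mul1r addn0 Hchi [w0 *m _]thinmx0 g0.
exists D.+1, (fun j => (char_poly Q)`_j); split.
  by have := char_poly_monic Q; rewrite monicE lead_coefE size_char_poly => /eqP.
move=> i.
have H0 := Cayley_Hamilton Q.
transitivity (g (w0 *m Q ^+ i *m horner_mx Q (char_poly Q))); last first.
  by rewrite H0 mulmx0 g0.
rewrite -[char_poly Q in RHS]coefK poly_def rmorph_sum /= mulmx_sumr lin_sum //.
rewrite size_char_poly; apply: eq_bigr => j _.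
rewrite linearZ /= rmorphXn /= horner_mx_X -scalemxAr gZ -mulmxA.
by rewrite mulmxE -exprD Hchi.
Qed.

Lemma odd21 i : odd (2 * i + 1) = true.
Proof. by rewrite addn1 /= oddM andFb. Qed.

Lemma half21 i : (2 * i + 1)./2 = i.
Proof. by rewrite addn1 /= mul2n uphalf_double. Qed.

Lemma Hpick (f : nat -> CC) N t : (t <= N)%N ->
  \sum_(k < N.+1) f k * ((N - k)%N == t)%:R = f (N - t)%N.
Proof.
move=> le.
have lt : (N - t < N.+1)%N by lia.
rewrite (bigD1 (Ordinal lt)) //= big1 ?addr0; first by rewrite subKn // eqxx mulr1.
move=> k nk; have -> : (N - k == t)%N = false; last by rewrite mulr0.
apply/negP => /eqP E; move: nk; apply/negP; rewrite negbK; apply/eqP/val_inj => /=.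
have := ltn_ord k; lia.
Qed.

Lemma series (chi : nat -> CC) d (b : nat -> CC) (bd : b d = 1)
  (Hb : forall i, \sum_(j < d.+1) b j * chi (i + j)%N = 0) :
  exists (p q : nat) (a c : nat -> CC),
    let den : {poly CC} := 1 + \sum_(1 <= j < q.+1) c j *: 'X^(2 * j) in
    let num : {poly CC} := \sum_(i < p.+1) a i *: 'X^(2 * i + 1) in
    forall N : nat,
      \sum_(k < N.+1) chi_series chi k * den`_(N - k) = num`_N.
Proof.
pose c := fun j => b (d - j)%N.
have Hrec : forall m, (d <= m)%N ->
    chi m + \sum_(1 <= j < d.+1) c j * chi (m - j)%N = 0.
  move=> m le; transitivity (\sum_(j < d.+1) b j * chi (m - d + j)%N); last exact: Hb.
  rewrite -(big_mkord xpredT (fun j => b j * chi (m - d + j)%N)) [in RHS]big_nat_rev /=.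
  rewrite [in RHS]big_nat_recl // big_add1 /=.
  congr (_ + _).
    have -> : (0 + d.+1 - 1 = d)%N by lia.
    by rewrite subnK // bd mul1r.
  rewrite big_nat_cond [RHS]big_nat_cond; apply: eq_bigr => j /andP[/andP[_ lt] _].
  rewrite /c; have -> : (0 + d.+1 - j.+2 = d - j.+1)%N by lia.
  congr (_ * chi _); lia.
exists d, d,
  (fun i => \sum_(k < (2 * i + 1).+1) chi_series chi k *
     (1 + \sum_(1 <= j < d.+1) c j *: 'X^(2 * j) : {poly CC})`_((2 * i + 1) - k)), c.
move=> den num N.
have cs : forall x, chi_series chi (2*x+1) = chi x by move=> x; rewrite /chi_series odd21 half21.
have dencoef : forall t, den`_t = (t == 0)%N%:R + \sum_(1 <= j < d.+1) c j * (t == 2 * j)%N%:R.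
  move=> t; rewrite /den coefD coef1 coef_sum; congr (_ + _).
  by apply: eq_bigr => j _; rewrite coefZ coefXn.
have den_odd : forall t, odd t -> den`_t = 0.
  move=> t ot; rewrite dencoef big1 ?addr0.
    by have -> : (t == 0)%N = false by case: t ot.
  move=> j _; have -> : (t == 2 * j)%N = false; last by rewrite mulr0.
  by apply/negP => /eqP E; move: ot; rewrite E oddM.
have numcoef : num`_N = \sum_(i < d.+1) (\sum_(k < (2 * i + 1).+1) chi_series chi k *
     den`_((2 * i + 1) - k)) * (N == 2 * i + 1)%N%:R.
  by rewrite /num coef_sum; apply: eq_bigr => i _; rewrite coefZ coefXn.
rewrite numcoef.
case oN : (odd N).
  have [m HN] : exists m, N = (2 * m + 1)%N.
    by exists N./2; move: (odd_double_half N); rewrite oN -muln2; lia.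
  subst N; case: (leqP m d) => hm.
    rewrite [RHS](bigD1 (Ordinal (hm : (m < d.+1)%N))) //= [X in _ = _ + X]big1 ?addr0.
      by rewrite eqxx mulr1.
    move=> i ni; have -> : (2 * m + 1 == 2 * i + 1)%N = false; last by rewrite mulr0.
    apply/negP => /eqP E; move: ni; apply/negP; rewrite negbK; apply/eqP/val_inj => /=.
    lia.
  rewrite [RHS]big1; last first.
    move=> i _; have -> : (2 * m + 1 == 2 * i + 1)%N = false; last by rewrite mulr0.
    apply/negP => /eqP E; have := ltn_ord i; lia.
  under eq_bigr => k _ do rewrite dencoef mulrDr mulr_sumr.
  rewrite big_split /= Hpick // subn0 cs.
  rewrite exchange_big /=.
  rewrite -[RHS](Hrec m); last by lia.
  congr (_ + _); apply: eq_big_nat => j /andP[j1 j2].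
  under eq_bigr => k _ do rewrite mulrCA.
  rewrite -mulr_sumr Hpick; last by lia.
  have -> : (2 * m + 1 - 2 * j = 2 * (m - j) + 1)%N by lia.
  by rewrite cs.
rewrite [RHS]big1; last first.
  move=> i _; have -> : (N == 2 * i + 1)%N = false; last by rewrite mulr0.
  by apply/negP => /eqP E; move: oN; rewrite E odd21.
apply: big1 => k _.
case ok : (odd k); last by rewrite /chi_series ok mul0r.
rewrite den_odd ?mulr0 // oddB ?oN ?ok //.
by have := ltn_ord k; rewrite ltnS.
Qed.

Theorem lemma5p3 (n0 n1 : nat) (gen : idx -> idx -> nat -> 'M[CC]_(n0 + n1))
  (Hrep : YQ1_rep gen) (Hsimple : simple_rep gen)
  (chi : nat -> CC) (Hchi : forall i : nat, Zc gen i = (chi i)%:M) :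
  exists (p q : nat) (a c : nat -> CC),
    let den : {poly CC} := 1 + \sum_(1 <= j < q.+1) c j *: 'X^(2 * j) in
    let num : {poly CC} := \sum_(i < p.+1) a i *: 'X^(2 * i + 1) in
    forall N : nat,
      \sum_(k < N.+1) chi_series chi k * den`_(N - k) = num`_N.
Proof.
have [npos _] := Hsimple.
pose i0 : 'I_(n0 + n1) := Ordinal npos.
pose T := Tc gen true true 2.
pose X := Tc gen true false 1.
pose P : 'M[CC]_((n0 + n1) * (n0 + n1)) := lin_mulmx T - lin_mulmxr T.
have HP : forall Y, mxvec (scomm (par true + par true) (par true + par false) T Y) = mxvec Y *m P.
  move=> Y; rewrite /scomm /sgn /= mul0n expr0 scale1r mulmxBr /lin_mulmx /lin_mulmxr.
  by rewrite !mul_vec_lin /= linearB.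
have Hit : forall k, mxvec (iter k (fun Y => scomm (par true + par true) (par true + par false) T Y) X)
    = mxvec X *m P ^+ k.
  elim=> [|k IH]; first by rewrite expr0 mulmx1.
  by rewrite iterS HP IH exprSr -mulmxE mulmxA.
pose cst : CC := - 2^-1.
pose Q := (cst *: P) ^+ 2.
have Heta : forall i, mxvec (Defs.eta gen (2 * i)%N) = mxvec X *m Q ^+ i.
  move=> i; rewrite /Defs.eta linearZ /= Hit /Q -exprM scalemxAr; congr (_ *m _).
  elim: (2 * i)%N => [|k IH]; first by rewrite !expr0 scale1r.
  by rewrite !exprS -!mulmxE -scalemxAl -IH -scalemxAr scalerA.
pose g := fun w : 'rV[CC]_((n0 + n1) * (n0 + n1)) =>
  (2^-1 *: scomm (par true + par false) (par true + par false) (Defs.eta gen 0) (vec_mx w)) i0 i0.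
have Hg : forall i, chi i = g (mxvec X *m Q ^+ i).
  move=> i; rewrite /g -Heta mxvecK.
  have E : (chi i)%:M i0 i0 = chi i by rewrite mxE eqxx mulr1n.
  by rewrite -E -Hchi.
have addE : forall A B : 'M[CC]_(n0 + n1), (A + B) i0 i0 = A i0 i0 + B i0 i0.
  by move=> A B; rewrite mxE.
have sclE : forall a (A : 'M[CC]_(n0 + n1)), (a *: A) i0 i0 = a * A i0 i0.
  by move=> a A; rewrite mxE.
have gD : forall u v, g (u + v) = g u + g v.
  move=> u v; rewrite /g -addE; congr (fun A => A i0 i0).
  rewrite /scomm [vec_mx (u + v)]linearD /= mulmxDr mulmxDl scalerDr.
  by rewrite !(scalerDr, scalerN, opprD, scalerBr) addrACA.
have gZ : forall a u, g (a *: u) = a * g u.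
  move=> a u; rewrite /g -sclE; congr (fun A => A i0 i0).
  rewrite /scomm [vec_mx (a *: u)]linearZ /= -scalemxAr -scalemxAl !scalerBr !scalerA.
  have -> : 2^-1 * (sgn ((0+1)*(0+1)) * a) = a / 2 * sgn ((0+1)*(0+1)) by ring.
  have -> : (2^-1 * a = a / 2 :> CC) by ring.
  by [].
have [d [b [bd Hb]]] := @recur _ Q _ g gD gZ chi Hg.
exact: (@series chi d b bd Hb).
Qed.
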